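(* Under the standing setup below, \[ a_{-n-1} \sim \frac{\pi/4}{\arctan u_1}\, D_n \quad \text{as } n \to +\infty . \] In particular, $a_{-n-1} > 0$ for all sufficiently large $n$.
   Context: Standing setup: $a_0, a_1 \in \mathbb{Z}$ and $u_0 > u_1 > 0$ are rational numbers with $a_0 \arctan u_0 + a_1 \arctan u_1 = \pi/4$. Let $\alpha := \arctan u_0 / \arctan u_1$ (which is $>1$ and irrational), with infinite simple continued fraction expansion $\alpha = [q_0; q_1, q_2, \dots]$, $q_i \in \mathbb{N}$. The integers $a_{-n}$ for $n \geq 1$ are defined recursively by $a_{-n-1} := q_n a_{-n} + a_{-n+1}$ for all $n \in \mathbb{N}_0$. The sequences $N_k, D_k$ ($k \ge -2$) are defined by $N_{-2}=0$, $N_{-1}=1$, $D_{-2}=1$, $D_{-1}=0$, and $N_k = q_k N_{k-1} + N_{k-2}$, $D_k = q_k D_{k-1} + D_{k-2}$ for $k \in \mathbb{N}_0$; thus $N_n/D_n = [q_0; q_1, \dots, q_n]$ in lowest terms for $n \ge 0$. *)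

(* Defs.v *)
From Stdlib Require Import Reals QArith ZArith.
From Coquelicot Require Import Coquelicot.
Open Scope R_scope.

Fixpoint cf_rem (x : R) (n : nat) : R :=
  match n with
  | O => x
  | S m => / (cf_rem x m - IZR (Int_part (cf_rem x m)))
  end.

Definition cf_q (x : R) (n : nat) : Z := Int_part (cf_rem x n).

(* The sequences N_k, D_k (k >= -2), shifted by 2:
   Nsh x j = N_{j-2}, Dsh x j = D_{j-2}. *)
Fixpoint Nsh (x : R) (j : nat) : Z :=
  match j with
  | O => 0%Z
  | S O => 1%Z
  | S ((S k) as j1) => (cf_q x k * Nsh x j1 + Nsh x k)%Z
  end.

Fixpoint Dsh (x : R) (j : nat) : Z :=
  match j with
  | O => 1%Z
  | S O => 0%Z
  | S ((S k) as j1) => (cf_q x k * Dsh x j1 + Dsh x k)%Z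
  end.

Definition Dn (x : R) (n : nat) : Z := Dsh x (n + 2).

(* The sequence a_{1-j}:  ash x a0 a1 j = a_{1-j}, so ash 0 = a_1, ash 1 = a_0,
   ash (n+2) = q_n * ash (n+1) + ash n,  i.e. a_{-n-1} = q_n a_{-n} + a_{-n+1}. *)
Fixpoint ash (x : R) (a0 a1 : Z) (j : nat) : Z :=
  match j with
  | O => a1
  | S O => a0
  | S ((S k) as j1) => (cf_q x k * ash x a0 a1 j1 + ash x a0 a1 k)%Z
  end.

(* a_{-n-1} for n >= 0 *)
Definition a_neg (x : R) (a0 a1 : Z) (n : nat) : Z := ash x a0 a1 (n + 2).

(* Main.v *)
Require Import Defs.
From Stdlib Require Import Reals QArith ZArith.
From Coquelicot Require Import Coquelicot.
From Stdlib Require Import Lra Lia.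
Open Scope R_scope.

Lemma lim_helper (u : nat -> R) (l C : R) :
  (forall n, Rabs (u n - l) <= C / INR (S n)) -> is_lim_seq u l.
Proof.
  intros H.
  assert (Hi : is_lim_seq (fun n => / INR (S n)) 0).
  { assert (H0 : is_lim_seq (fun n => / INR n) 0).
    { replace (Finite 0) with (Rbar_inv p_infty) by reflexivity.
      apply (is_lim_seq_inv INR p_infty); [apply is_lim_seq_INR | discriminate]. }
    apply (is_lim_seq_incr_1 (fun n => / INR n)) in H0. exact H0. }
  assert (HC : is_lim_seq (fun n => C * / INR (S n)) 0).
  { replace (Finite 0) with (Rbar_mult C 0) by (simpl; f_equal; ring).
    apply is_lim_seq_scal_l; exact Hi. }
  apply is_lim_seq_le_le with (u := fun n => l - C * / INR (S n))
                              (w := fun n => l + C * / INR (S n)).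
  - intros n. specialize (H n). unfold Rdiv in H. apply Rabs_le_between' in H. lra.
  - replace (Finite l) with (Finite (l - 0)) by (f_equal; ring).
    apply is_lim_seq_minus'; [apply is_lim_seq_const | exact HC].
  - replace (Finite l) with (Finite (l + 0)) by (f_equal; ring).
    apply is_lim_seq_plus'; [apply is_lim_seq_const | exact HC].
Qed.

Section CF.
Variable x : R.
Hypothesis Hx1 : 1 < x.
Hypothesis Hirr : forall N D : Z, (0 < D)%Z -> x <> IZR N / IZR D.

Lemma Nsh_SS k : Nsh x (S (S k)) = (cf_q x k * Nsh x (S k) + Nsh x k)%Z.
Proof. reflexivity. Qed.
Lemma Dsh_SS k : Dsh x (S (S k)) = (cf_q x k * Dsh x (S k) + Dsh x k)%Z.
Proof. reflexivity. Qed.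

Definition Inv n :=
  1 < cf_rem x n /\ (0 <= Dsh x n)%Z /\ (0 <= Dsh x (S n))%Z /\
  (0 < Dsh x n + Dsh x (S n))%Z /\
  x = (IZR (Nsh x (S n)) * cf_rem x n + IZR (Nsh x n)) /
      (IZR (Dsh x (S n)) * cf_rem x n + IZR (Dsh x n)).

Lemma q_ge1 n : Inv n -> (1 <= cf_q x n)%Z.
Proof.
  intros [H1 _]. unfold cf_q. destruct (base_Int_part (cf_rem x n)) as [A B].
  assert (0 < IZR (Int_part (cf_rem x n))) by lra.
  apply lt_IZR in H. lia.
Qed.

Lemma Inv_all n : Inv n.
Proof.
  induction n as [|n IH].
  - unfold Inv; simpl. repeat split; try lia; try lra. field. 
  - pose proof (q_ge1 n IH) as Hq.
    destruct IH as (H1 & D0 & D1 & Ds & Hx).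
    set (r := cf_rem x n) in *.
    set (qn := cf_q x n) in *.
    assert (Hqr : qn = Int_part r) by reflexivity.
    destruct (base_Int_part r) as [A B]. rewrite <- Hqr in A, B.
    set (f := r - IZR qn).
    assert (Hrs : cf_rem x (S n) = / f) by reflexivity.
    assert (Hf0 : f <> 0).
    { intro Hf. apply (Hirr (Nsh x (S n) * qn + Nsh x n) (Dsh x (S n) * qn + Dsh x n)).
      - nia.
      - assert (r = IZR qn) by (unfold f in Hf; lra).
        rewrite !plus_IZR, !mult_IZR, <- H. exact Hx. }
    assert (Hfp : 0 < f) by (unfold f in *; lra).
    assert (Hf1 : f < 1) by (unfold f in *; lra).
    unfold Inv. rewrite Hrs, Nsh_SS, Dsh_SS. fold qn.
    assert (Hd : 0 < IZR (Dsh x (S n)) * r + IZR (Dsh x n)).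
    { apply IZR_le in D0. apply IZR_le in D1. apply IZR_lt in Ds. rewrite plus_IZR in Ds.
      assert (IZR (Dsh x (S n)) * r >= IZR (Dsh x (S n))) by nra. lra. }
    repeat split; try nia.
    + rewrite <- Rinv_1. apply Rinv_lt_contravar; lra.

    + etransitivity; [exact Hx|]. rewrite !plus_IZR, !mult_IZR.
      assert (Hr : r = IZR qn + f) by (unfold f; ring).
      rewrite Hr in Hd |- *. field. split.
      * lra.
      * lra.
Qed.

Lemma D_bounds n : (1 <= Dsh x (n+2))%Z /\ (Z.of_nat n <= Dsh x (n+2))%Z /\
                   (1 <= Dsh x (n+3))%Z /\ (Z.of_nat (S n) <= Dsh x (n+3))%Z.
Proof.
  induction n as [|n IH].
  - simpl. pose proof (q_ge1 1 (Inv_all 1)). lia.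
  - replace (S n + 2)%nat with (n + 3)%nat by lia.
    replace (S n + 3)%nat with (S (S (n + 2)))%nat by lia.
    rewrite Dsh_SS. replace (S (n+2)) with (n+3)%nat by lia.
    pose proof (q_ge1 (n+2) (Inv_all _)). nia.
Qed.

Lemma det n : (Nsh x (S n) * Dsh x n - Nsh x n * Dsh x (S n) = 1 \/
               Nsh x (S n) * Dsh x n - Nsh x n * Dsh x (S n) = -1)%Z.
Proof.
  induction n as [|n IH].
  - simpl. lia.
  - rewrite Nsh_SS, Dsh_SS.
    assert (E : (((cf_q x n * Nsh x (S n) + Nsh x n) * Dsh x (S n) -
             Nsh x (S n) * (cf_q x n * Dsh x (S n) + Dsh x n)) =
            - (Nsh x (S n) * Dsh x n - Nsh x n * Dsh x (S n)))%Z) by ring.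
    lia.
Qed.

Lemma conv_err n :
  Rabs (IZR (Nsh x (n+2)) / IZR (Dsh x (n+2)) - x) <= 2 / INR (S n).
Proof.
  destruct (Inv_all (S n)) as (H1 & _ & _ & _ & Hx).
  replace (S (S n)) with (n+2)%nat in Hx by lia.
  destruct (D_bounds n) as (B1 & B2 & _).
  set (R0 := cf_rem x (S n)) in *.
  set (N1 := Nsh x (S n)) in *. set (N2 := Nsh x (n+2)) in *.
  set (D1 := Dsh x (S n)) in *. set (D2 := Dsh x (n+2)) in *.
  assert (D1p : (0 <= D1)%Z).
  { destruct (Inv_all n) as (_ & _ & h & _). exact h. }
  assert (Hdet : (N1 * D2 - N2 * D1 = 1 \/ N1 * D2 - N2 * D1 = -1)%Z).
  { pose proof (det (S n)) as Hd. unfold N1, N2, D1, D2.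
    replace (n+2)%nat with (S (S n)) by lia. lia. }
  apply IZR_le in B1. apply IZR_le in B2. apply IZR_le in D1p.
  rewrite <- INR_IZR_INZ in B2.
  assert (Hden : 0 < IZR D2 * R0 + IZR D1) by nra.
  assert (E : IZR N2 / IZR D2 - x = - IZR (N1 * D2 - N2 * D1) / (IZR D2 * (IZR D2 * R0 + IZR D1))).
  { rewrite Hx, minus_IZR, !mult_IZR. field. lra. }
  rewrite E.
  assert (Ha : Rabs (- IZR (N1 * D2 - N2 * D1)) = 1).
  { rewrite Rabs_Ropp. destruct Hdet as [h|h]; rewrite h.
    - apply Rabs_R1.
    - rewrite Rabs_Zabs. reflexivity. }
  unfold Rdiv. rewrite Rabs_mult, Ha, Rabs_inv, Rabs_pos_eq by nra.
  rewrite S_INR.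
  apply Rmult_le_reg_r with (IZR D2 * (IZR D2 * R0 + IZR D1) * (INR n + 1)).
  { apply Rmult_lt_0_compat; [nra | pose proof (pos_INR n); lra]. }
  field_simplify; try (pose proof (pos_INR n); nra).
Qed.

End CF.

Theorem corollary1 (a0 a1 : Z) (u0 u1 : Q)
  (Hu1 : 0 < Q2R u1) (Hu01 : Q2R u1 < Q2R u0)
  (Hrel : IZR a0 * atan (Q2R u0) + IZR a1 * atan (Q2R u1) = PI / 4)
  (Hirr : forall r : Q, atan (Q2R u0) / atan (Q2R u1) <> Q2R r) :
  let alpha := atan (Q2R u0) / atan (Q2R u1) in
  is_lim_seq (fun n : nat => IZR (a_neg alpha a0 a1 n) / IZR (Dn alpha n))
             ((PI / 4) / atan (Q2R u1))
  /\ (exists N : nat, forall n : nat, (N <= n)%nat -> (0 < a_neg alpha a0 a1 n)%Z).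
Proof.
  intros alpha.
  set (t0 := atan (Q2R u0)) in *. set (t1 := atan (Q2R u1)) in *.
  assert (Ht1 : 0 < t1) by (rewrite <- atan_0; apply atan_increasing; exact Hu1).
  assert (Ht01 : t1 < t0) by (apply atan_increasing; exact Hu01).
  assert (Hal : 1 < alpha).
  { assert (E : alpha - 1 = (t0 - t1) / t1) by (unfold alpha; field; lra).
    assert (0 < (t0 - t1) / t1) by (apply Rdiv_lt_0_compat; lra). lra. }
  assert (Hirr' : forall N D : Z, (0 < D)%Z -> alpha <> IZR N / IZR D).
  { intros N D HD E. apply (Hirr (Qmake N (Z.to_pos D))).
    fold alpha. rewrite E. unfold Q2R; simpl. rewrite Z2Pos.id by exact HD. reflexivity. }
  assert (Hash : forall j, ash alpha a0 a1 j = (a0 * Nsh alpha j + a1 * Dsh alpha j)%Z /\ ash alpha a0 a1 (S j) = (a0 * Nsh alpha (S j) + a1 * Dsh alpha (S j))%Z).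
  { induction j as [|j [IH1 IH2]].
    - simpl. split; ring.
    - split; [exact IH2|].
      change (ash alpha a0 a1 (S (S j))) with
        (cf_q alpha j * ash alpha a0 a1 (S j) + ash alpha a0 a1 j)%Z.
      rewrite Nsh_SS, Dsh_SS, IH1, IH2. ring. }
  set (L := PI / 4 / t1).
  assert (Key : forall n, Rabs (IZR (a_neg alpha a0 a1 n) / IZR (Dn alpha n) - L)
                          <= (Rabs (IZR a0) * 2) / INR (S n)).
  { intros n. destruct (D_bounds alpha Hal Hirr' n) as [B1 _].
    apply IZR_le in B1.
    unfold a_neg, Dn. rewrite (proj1 (Hash (n+2)%nat)).
    assert (E : IZR (a0 * Nsh alpha (n + 2) + a1 * Dsh alpha (n + 2)) / IZR (Dsh alpha (n + 2)) - L
               = IZR a0 * (IZR (Nsh alpha (n+2)) / IZR (Dsh alpha (n+2)) - alpha)).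
    { unfold L, alpha. rewrite <- Hrel, plus_IZR, !mult_IZR. field. fold alpha. split; lra. }
    rewrite E, Rabs_mult. unfold Rdiv at 2. rewrite Rmult_assoc.
    apply Rmult_le_compat_l; [apply Rabs_pos|].
    apply (conv_err alpha Hal Hirr' n). }
  assert (Hlim : is_lim_seq (fun n => IZR (a_neg alpha a0 a1 n) / IZR (Dn alpha n)) L)
    by (apply (lim_helper _ _ _ Key)).
  split; [exact Hlim|].
  assert (HL : 0 < L) by (unfold L; apply Rdiv_lt_0_compat; [pose proof PI_RGT_0; lra | lra]).
  apply is_lim_seq_spec in Hlim.
  destruct (Hlim (mkposreal (L/2) ltac:(lra))) as [N HN].
  exists N. intros n Hn. specialize (HN n Hn). simpl in HN.
  apply Rabs_lt_between' in HN.
  destruct (D_bounds alpha Hal Hirr' n) as [B1 _].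
  apply IZR_le in B1. unfold Dn in HN.
  apply lt_IZR.
  assert (E : IZR (a_neg alpha a0 a1 n) =
     IZR (a_neg alpha a0 a1 n) / IZR (Dsh alpha (n + 2)) * IZR (Dsh alpha (n + 2)))
    by (field; lra).
  rewrite E. apply Rmult_lt_0_compat; lra.
Qed.
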